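(* $\widetilde{\mathbb{C}}=\widehat{\mathbb{C}}=\mathbb{Q}$.
   Context: Let $K$ be a field. For $r\in K$, a finite set $A(r)$ with $\{r\}\subseteq A(r)\subseteq K$ is called adequate for $r$ if every mapping $f:A(r)\to K$ satisfying (1) if $1\in A(r)$ then $f(1)=1$; (2) if $a,b\in A(r)$ and $a+b\in A(r)$ then $f(a+b)=f(a)+f(b)$; (3) if $a,b\in A(r)$ and $a\cdot b\in A(r)$ then $f(a\cdot b)=f(a)\cdot f(b)$, also satisfies $f(r)=r$. $\widetilde{K}$ denotes the set of all $r\in K$ for which some finite set adequate for $r$ exists. $\widehat{K}=\bigcap_{\sigma\in \mathrm{End}(K)}\{x\in K:\sigma(x)=x\}$, where $\mathrm{End}(K)$ is the set of all field endomorphisms of $K$. *)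

(* Defs.v *)
(* the field C is modelled as  R[i] = complex R  (mathcomp-real-closed)
   over Stdlib's classical reals R (a realType, hence an rcfType, via Rstruct). *)
From HB Require Import structures.
From mathcomp Require Import all_boot all_order all_algebra.
From mathcomp Require Import complex.
From mathcomp Require Import Rstruct.
From Stdlib Require Import Reals.
Set Implicit Arguments. Unset Strict Implicit. Unset Printing Implicit Defensive.
Import Order.TTheory GRing.Theory Num.Theory.
Local Open Scope ring_scope.

Definition CC : fieldType := complex Rdefinitions.R.

Definition adequate (K : fieldType) (A : seq K) (r : K) : Prop :=
  r \in A /\
  forall f : K -> K,
    (1 \in A -> f 1 = 1) ->
    (forall a b, a \in A -> b \in A -> a + b \in A -> f (a + b) = f a + f b) ->
    (forall a b, a \in A -> b \in A -> a * b \in A -> f (a * b) = f a * f b) ->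
    f r = r.

Definition Ktilde (K : fieldType) (r : K) : Prop := exists A : seq K, adequate A r.

Definition Khat (K : fieldType) (x : K) : Prop :=
  forall sigma : {rmorphism K -> K}, sigma x = x.

Definition is_rational (K : fieldType) (x : K) : Prop := exists q : rat, x = ratr q.

(* Main.v *)
Require Import Defs.
From mathcomp Require Import all_boot all_algebra.
From HB Require Import structures.
From mathcomp Require Import all_boot all_order all_algebra boolp.
From mathcomp Require Import ring zify.
From mathcomp Require classical_sets.
From mathcomp Require Import complex Rstruct.
Set Implicit Arguments. Unset Strict Implicit. Unset Printing Implicit Defensive.
Import Order.TTheory GRing.Theory Num.Theory.
Local Open Scope ring_scope.

Section Gen.
Variable L : numClosedFieldType.

Definition ph (D : {pred L}) (t : L -> L) : Prop :=
  [/\ GRing.divring_closed D, {in D &, forall x y, t (x - y) = t x - t y},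
      {in D &, forall x y, t (x * y) = t x * t y} & t 1 = 1].

Definition pOver (D : {pred L}) (p : {poly L}) := forall i, p`_i \in D.

Definition alg (D : {pred L}) (c : L) : Prop :=
  exists2 p : {poly L}, pOver D p & p != 0 /\ p.[c] = 0.

Section Sub.
Variables (D : {pred L}) (HD : GRing.divring_closed D).

Inductive SD := mkSD x & x \in D.
Definition vSD u := let: mkSD x _ := u in x.
HB.instance Definition _ := [isSub for vSD].
HB.instance Definition _ := [Choice of SD by <:].
HB.instance Definition _ := GRing.SubChoice_isSubIntegralDomain.Build L D SD HD.
HB.instance Definition _ := [SubIntegralDomain_isSubField of SD by <:].

Lemma polyOver_valP (p : {poly L}) :
  pOver D p -> exists q : {poly SD}, p = map_poly val q.
Proof.
move=> Hp.
exists (\poly_(i < size p) insubd (0 : SD) p`_i).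
apply/polyP=> i; rewrite coef_map /= coef_poly.
case: ltnP => [_|le]; first by rewrite insubdK.
by rewrite nth_default.
Qed.

Lemma polyOver_map (q : {poly SD}) : pOver D (map_poly val q).
Proof. by move=> i; rewrite coef_map /=; apply: valP. Qed.

Lemma alg_algebraicOver c : alg D c <-> algebraicOver (val : SD -> L) c.
Proof.
split.
  case=> p /polyOver_valP [q ->] [nz r]; exists q; last by apply/rootP.
  by apply: contra nz => /eqP->; rewrite map_poly0.
case=> q nz /rootP r; exists (map_poly val q); first exact: polyOver_map.
by rewrite map_poly_eq0.
Qed.
Notation vv := (val : SD -> L).

Lemma alg_in d : d \in D -> alg D d.
Proof.
move=> Dd; apply/alg_algebraicOver.
by have := @algebraic_id SD L val (insubd 0 d); rewrite /= insubdK.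
Qed.

Lemma alg_add x y : alg D x -> alg D y -> alg D (x + y).
Proof. by move=> /alg_algebraicOver ? /alg_algebraicOver ?; apply/alg_algebraicOver/algebraic_add. Qed.
Lemma alg_mul x y : alg D x -> alg D y -> alg D (x * y).
Proof. by move=> /alg_algebraicOver ? /alg_algebraicOver ?; apply/alg_algebraicOver/algebraic_mul. Qed.
Lemma alg_opp x : alg D x -> alg D (- x).
Proof. by move=> /alg_algebraicOver ?; apply/alg_algebraicOver/algebraic_opp. Qed.
Lemma alg_inv x : alg D x -> alg D (x^-1).
Proof. by move=> /alg_algebraicOver ?; apply/alg_algebraicOver/algebraic_inv. Qed.
Lemma alg_div x y : alg D x -> alg D y -> alg D (x / y).
Proof. by move=> ? ?; apply: alg_mul => //; apply: alg_inv. Qed.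

Lemma alg_root (p : {poly L}) c : p != 0 -> p.[c] = 0 -> (forall i, alg D p`_i) -> alg D c.
Proof.
move=> nz pc H; apply/alg_algebraicOver/integral_algebraic.
apply: (integral_root nz); first by apply/rootP.
move=> z /(nthP 0) [i _ <-]; apply/integral_algebraic/alg_algebraicOver; exact: H.
Qed.

Lemma alg_horner (p : {poly L}) c : (forall i, alg D p`_i) -> alg D c -> alg D p.[c].
Proof.
move=> H /alg_algebraicOver/integral_algebraic Hc.
apply/alg_algebraicOver/integral_algebraic; apply: integral_horner => //.
move=> z /(nthP 0) [i _ <-]; apply/integral_algebraic/alg_algebraicOver; exact: H.
Qed.

Definition isMin (a : L) (m : {poly SD}) := [/\ m != 0, (map_poly vv m).[a] = 0 &
  forall r : {poly SD}, r != 0 -> (map_poly vv r).[a] = 0 -> (size m <= size r)%N].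

Lemma minpoly_ex a : alg D a -> exists m, isMin a m.
Proof.
case/alg_algebraicOver => q nz /rootP qa.
pose P n := `[< exists r : {poly SD}, [/\ r != 0, (map_poly vv r).[a] = 0 & size r = n] >].
have exP : exists n, P n by exists (size q); apply/asboolP; exists q.
case: (ex_minnP exP) => n /asboolP [m [mnz ma <-]] Hmin.
exists m; split=> // r rnz ra; apply: Hmin; apply/asboolP; by exists r.
Qed.

Lemma prod_nseq (a : L) n : \prod_(z <- nseq n a) ('X - z%:P) = ('X - a%:P) ^+ n.
Proof. by elim: n => [|n IH]; rewrite ?big_nil ?expr0 // /= big_cons IH exprS. Qed.

Lemma nseq_all (rs : seq L) a : (forall z, z \in rs -> z = a) -> rs = nseq (size rs) a.
Proof.
elim: rs => //= z rs IH H; rewrite (H z (mem_head _ _)) IH ?size_nseq //.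
by move=> w wr; apply: H; rewrite inE wr orbT.
Qed.

Lemma other_root a m : isMin a m -> a \notin D ->
  exists2 y, y != a & (map_poly vv m).[y] = 0.
Proof.
case=> mnz ma mmin aD.
have [//|Hno] := pselect (exists2 y, y != a & (map_poly vv m).[y] = 0); exfalso.
have H y : (map_poly vv m).[y] = 0 -> y = a.
  by move=> Hy; apply/eqP; apply/negPn/negP => ny; apply: Hno; exists y.
set M := map_poly vv m in ma H.
have Mnz : M != 0 by rewrite map_poly_eq0.
have lcnz : lead_coef M != 0 by rewrite lead_coef_eq0.
case: (closed_field_poly_normal M) => rs HM.
have sM : size M = (size rs).+1 by rewrite HM size_scale // size_prod_XsubC.
have rsa : rs = nseq (size rs) a.
  apply: nseq_all => z zr; apply: H; rewrite HM hornerZ.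
  by move: zr; rewrite -root_prod_XsubC => /rootP ->; rewrite mulr0.
rewrite rsa prod_nseq in HM.
move: HM sM; set lc := lead_coef M; case: (size rs) => [|[|k]] HM sM.
- have Mc : M = (M`_0)%:P by apply/size1_polyC; rewrite sM.
  move: Mnz ma; rewrite Mc hornerC => Mnz0 Mz; move: Mnz0; by rewrite Mz polyC0 eqxx.
- case/negP: aD.
  have e0 : M`_0 = val (m`_0) by rewrite coef_map.
  have e1 : M`_1 = val (m`_1) by rewrite coef_map.
  have c1 : M`_1 = lc by rewrite {1}HM expr1 coefZ coefB coefX coefC /= subr0 mulr1.
  have c0 : M`_0 = - lc * a by rewrite {1}HM expr1 coefZ coefB coefX coefC /= sub0r mulrN mulNr.
  have aE : a = - M`_0 / M`_1 by rewrite c0 c1; field; exact: lcnz.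
  rewrite aE e0 e1 -rmorphN -fmorph_div; exact: valP.
- have dm : (map_poly vv m^`()).[a] = 0.
    rewrite -deriv_map -/M HM derivZ hornerZ !exprS derivM hornerD !hornerM.
    by rewrite hornerXsubC subrr !(mul0r, mulr0, addr0).
  have dnz : m^`() != 0.
    apply/eqP => d0; move: dm; rewrite d0.
    have : (M^`())`_k.+1 = lc *+ k.+2.
      rewrite coef_deriv /lc lead_coefE sM //.
    rewrite -/M deriv_map d0 rmorph0 coef0 => /esym/eqP.
    by rewrite mulrn_eq0 (negbTE lcnz).
  have := mmin _ dnz dm; rewrite leqNgt lt_size_deriv //.
Qed.

Section T.
Variables (t : L -> L) (Ht : ph D t).

Definition tS (x : SD) := t (val x).

Fact tS_zmod : zmod_morphism tS.
Proof.
case: Ht => _ HB _ _ x y; rewrite /tS rmorphB /= HB //; exact: valP.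
Qed.
Fact tS_mon : monoid_morphism tS.
Proof.
case: Ht => _ _ HM H1; split; first by rewrite /tS rmorph1.
by move=> x y; rewrite /tS rmorphM /= HM //; exact: valP.
Qed.
HB.instance Definition _ := GRing.isZmodMorphism.Build SD L tS tS_zmod.
HB.instance Definition _ := GRing.isMonoidMorphism.Build SD L tS tS_mon.

Lemma t0 : t 0 = 0.
Proof.
case: Ht => HD' HB _ _; have D0 : 0 \in D by rewrite -(subrr 1); case: HD' => H1 Hs _; apply: Hs.
by have := HB 0 0 D0 D0; rewrite subrr => ->; rewrite subrr.
Qed.

Lemma map_t_val (q : {poly SD}) : map_poly t (map_poly vv q) = map_poly tS q.
Proof. by apply/polyP=> i; rewrite coef_map_id0 ?t0 // !coef_map. Qed.

Lemma compat_min a m b : isMin a m -> (map_poly tS m).[b] = 0 ->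
  forall r : {poly SD}, ((map_poly vv r).[a] == 0) = ((map_poly tS r).[b] == 0).
Proof.
case=> mnz ma mmin mb r; apply/idP/idP => /eqP H.
  have rm0 : r %% m = 0.
    apply/eqP; apply/negPn/negP => nz.
    have : (map_poly vv (r %% m)).[a] = 0.
      move: H; rewrite {1}(divp_eq r m) rmorphD rmorphM hornerD hornerM ma mulr0 add0r.
      by [].
    move/(mmin _ nz); rewrite leqNgt ltn_modp mnz.
    by [].
  by rewrite (divp_eq r m) rm0 addr0 rmorphM hornerM mb mulr0.
apply/negPn/negP => ra.
pose g := gcdp r m.
have gm : m %/ g * g = m by rewrite divpK // dvdp_gcdr.
have gr : r %/ g * g = r by rewrite divpK // dvdp_gcdl.
have gnz : g != 0 by rewrite gcdp_eq0 negb_and mnz orbT.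
have ga : (map_poly vv g).[a] != 0.
  by move: ra; rewrite -gr rmorphM hornerM mulf_eq0 negb_or => /andP[].
have qa : (map_poly vv (m %/ g)).[a] = 0.
  by apply/eqP; move: (ma); rewrite -{1}gm rmorphM hornerM => /eqP; rewrite mulf_eq0 (negbTE ga) orbF.
have qnz : m %/ g != 0 by apply: contraNneq mnz => e; rewrite -gm e mul0r.
have := mmin _ qnz qa; rewrite -{1}gm size_mul // => Hs.
have sg : size g == 1%N.
  have h1 : (0 < size g)%N by rewrite size_poly_gt0.
  have h2 : (0 < size (m %/ g)%R)%N by rewrite size_poly_gt0.
  apply/eqP; move: Hs h1 h2; set x := size g; set y := size _; lia.
have /Bezout_coprimepP [[u v] /eqpP [[c1 c2] /andP [c1nz c2nz]]] : coprimep r m.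
  by rewrite coprimep_def.
rewrite /= => /(congr1 (fun z => (map_poly tS z).[b])).
rewrite !linearZ /= rmorphD !rmorphM /= hornerZ hornerD !hornerM H mb !mulr0 addr0 mulr0.
rewrite rmorph1 hornerZ hornerC mulr1 => /esym/eqP.
by rewrite fmorph_eq0 (negbTE c2nz).
Qed.

Lemma ALGC a : alg D a -> exists b,
  (forall p, pOver D p -> (p.[a] == 0) = ((map_poly t p).[b] == 0)) /\
  exists2 m, pOver D m & m != 0 /\ (map_poly t m).[b] = 0.
Proof.
case/minpoly_ex => m mm; have [mnz ma _] := mm.
have sm : size (map_poly tS m) != 1%N.
  rewrite size_map_poly; apply/eqP => sm1.
  have mc : m = (m`_0)%:P by apply/size1_polyC; rewrite sm1.
  move: ma mnz; rewrite mc map_polyC hornerC => /eqP; rewrite fmorph_eq0 => /eqP ->.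
  by rewrite eqxx.
case/closed_rootP: sm => b /rootP mb.
exists b; split.
  move=> p /polyOver_valP [q ->]; rewrite map_t_val; exact: compat_min mm mb q.
exists (map_poly vv m); first exact: polyOver_map.
by rewrite map_poly_eq0 map_t_val.
Qed.

Section Ext.
Variables (a b : L).
Hypothesis compat : forall p, pOver D p -> (p.[a] == 0) = ((map_poly t p).[b] == 0).

Lemma cS (r : {poly SD}) : ((map_poly vv r).[a] == 0) = ((map_poly tS r).[b] == 0).
Proof. by rewrite compat ?map_t_val //; exact: polyOver_map. Qed.

Definition ev (p q : {poly SD}) := (map_poly vv p).[a] / (map_poly vv q).[a].
Definition tev (p q : {poly SD}) := (map_poly tS p).[b] / (map_poly tS q).[b].
Definition good (q : {poly SD}) := (map_poly vv q).[a] != 0.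

Lemma good_t q : good q -> (map_poly tS q).[b] != 0.
Proof. by rewrite /good cS. Qed.

Lemma wd p q p' q' : good q -> good q' -> ev p q = ev p' q' -> tev p q = tev p' q'.
Proof.
move=> g g' E; have g1 := good_t g; have g1' := good_t g'.
move: g g' E; rewrite /good /ev /tev => g g' E.
have : (map_poly vv (p * q' - p' * q)).[a] == 0.
  rewrite !rmorphB !rmorphM hornerD hornerN !hornerM.
  have hA : (map_poly vv p).[a] = (map_poly vv p').[a] / (map_poly vv q').[a] * (map_poly vv q).[a].
    by rewrite -E mulfVK.
  rewrite hA; apply/eqP; field; exact g'.
rewrite cS !rmorphB !rmorphM hornerD hornerN !hornerM subr_eq0 => /eqP HH.
have hA : (map_poly tS p).[b] = (map_poly tS p').[b] * (map_poly tS q).[b] / (map_poly tS q').[b].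
  by rewrite -HH mulfK.
rewrite hA; field; apply/andP; split; [exact g1' | exact g1].
Qed.

Definition Pd y := exists p, exists q, good q /\ y = ev p q.
Definition D' : {pred L} := fun y => `[< Pd y >].
Definition t' y := match pselect (Pd y) with
  left H => let (p, H1) := cid H in let (q, _) := cid H1 in tev p q | right _ => 0 end.

Lemma t'E p q : good q -> t' (ev p q) = tev p q.
Proof.
move=> g; rewrite /t'; case: pselect => [H|nH]; last by case: nH; exists p, q.
case: cid => p' H1; case: cid => q' [g' e]; exact: wd.
Qed.

Lemma D'P y : y \in D' -> exists p q, good q /\ y = ev p q.
Proof. by rewrite /D' unfold_in => /asboolP. Qed.

Lemma D'ev p q : good q -> ev p q \in D'.
Proof. by move=> g; rewrite /D' unfold_in; apply/asboolP; exists p, q. Qed.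

Lemma good_mul q q' : good q -> good q' -> good (q * q').
Proof. by rewrite /good rmorphM hornerM => g g'; rewrite mulf_neq0. Qed.

Lemma ev_sub p q p' q' : good q -> good q' ->
  ev (p * q' - p' * q) (q * q') = ev p q - ev p' q'.
Proof.
rewrite /good /ev => g g'; rewrite !rmorphB !rmorphM hornerD hornerN !hornerM.
by field; apply/andP.
Qed.

Lemma tev_sub p q p' q' : good q -> good q' ->
  tev (p * q' - p' * q) (q * q') = tev p q - tev p' q'.
Proof.
move=> /good_t g /good_t g'; rewrite /tev.
rewrite !rmorphB !rmorphM hornerD hornerN !hornerM.
by field; apply/andP.
Qed.

Lemma ev_mul p q p' q' : good q -> good q' ->
  ev (p * p') (q * q') = ev p q * ev p' q'.
Proof.
rewrite /good /ev => g g'; rewrite !rmorphM !hornerM.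
by field; apply/andP.
Qed.

Lemma tev_mul p q p' q' : good q -> good q' ->
  tev (p * p') (q * q') = tev p q * tev p' q'.
Proof.
move=> /good_t g /good_t g'; rewrite /tev !rmorphM !hornerM.
by field; apply/andP.
Qed.

Lemma ev_div p q p' q' : good q -> good q' -> good p' ->
  ev (p * q') (q * p') = ev p q / ev p' q'.
Proof.
rewrite /good /ev => g g' g''; rewrite !rmorphM !hornerM.
by field; rewrite g g' g''.
Qed.

Lemma good1 : good 1.
Proof. by rewrite /good rmorph1 hornerC oner_eq0. Qed.

Lemma ev_C (d : SD) : ev d%:P 1 = val d.
Proof. by rewrite /ev rmorph1 map_polyC !hornerC divr1. Qed.
Lemma tev_C (d : SD) : tev d%:P 1 = tS d.
Proof. by rewrite /tev rmorph1 map_polyC !hornerC divr1. Qed.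
Lemma ev_X : ev 'X 1 = a.
Proof. by rewrite /ev rmorph1 map_polyX hornerX hornerC divr1. Qed.
Lemma tev_X : tev 'X 1 = b.
Proof. by rewrite /tev rmorph1 map_polyX hornerX hornerC divr1. Qed.

Lemma ev0 : ev 0 1 = 0.
Proof. by rewrite /ev rmorph0 horner0 mul0r. Qed.
Lemma ev1 : ev 1 1 = 1.
Proof. by rewrite /ev rmorph1 hornerC divr1. Qed.
Lemma tev1 : tev 1 1 = 1.
Proof. by rewrite /tev rmorph1 hornerC divr1. Qed.

Lemma EXT : exists D2 : {pred L}, exists t2 : L -> L,
  [/\ ph D2 t2, {subset D <= D2}, a \in D2 & {in D, t2 =1 t}] /\ t2 a = b /\
  (forall y, y \in D2 -> exists p q : {poly L},
     [/\ pOver D p, pOver D q & t2 y = (map_poly t p).[b] / (map_poly t q).[b]]).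
Proof.
exists D', t'; split; [split|split].
- split.
  + split; first by rewrite -ev1 D'ev // good1.
    * move=> u v /D'P [p [q [g ->]]] /D'P [p' [q' [g' ->]]].
      by rewrite -ev_sub // D'ev // good_mul.
    * move=> u v /D'P [p [q [g ->]]] /D'P [p' [q' [g' ->]]].
      have [e0|nz] := eqVneq (ev p' q') 0.
        by rewrite e0 invr0 mulr0 -ev0 D'ev // good1.
      have g'' : good p' by move: nz; rewrite /ev mulf_eq0 negb_or => /andP[].
      by rewrite -ev_div // D'ev // good_mul.
  + move=> u v /D'P [p [q [g ->]]] /D'P [p' [q' [g' ->]]].
    by rewrite -ev_sub // !t'E ?good_mul // tev_sub.
  + move=> u v /D'P [p [q [g ->]]] /D'P [p' [q' [g' ->]]].
    by rewrite -ev_mul // !t'E ?good_mul // tev_mul.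
    by have := @t'E 1 1 good1; rewrite ev1 tev1.
- move=> d Dd; have <- : ev (insubd 0 d)%:P 1 = d by rewrite ev_C insubdK.
  by rewrite D'ev // good1.
- by rewrite -ev_X D'ev // good1.
- move=> d Dd; have {1}<- : ev (insubd 0 d)%:P 1 = d by rewrite ev_C insubdK.
  by rewrite t'E ?good1 // tev_C /tS insubdK.
- by rewrite -ev_X t'E ?good1 // tev_X.
- move=> y /D'P [p [q [g ->]]]; exists (map_poly vv p), (map_poly vv q).
  by split; [exact: polyOver_map | exact: polyOver_map | rewrite t'E // /tev !map_t_val].
Qed.

End Ext.
End T.
End Sub.

Definition J0 (D : {pred L}) (t : L -> L) := forall y, y \in D -> alg D (t y).

Lemma alg_mono (D D' : {pred L}) c : {subset D <= D'} -> alg D c -> alg D' c.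
Proof. by move=> sub [p Hp [nz r]]; exists p => // i; apply: sub. Qed.

Lemma ph_nz D t x : ph D t -> x \in D -> x != 0 -> t x != 0.
Proof.
move=> [[H1 Hs Hd] _ HM Ht1] Dx nz.
have Dix : x^-1 \in D by rewrite -div1r; apply: Hd.
have := HM _ _ Dx Dix; rewrite mulfV // Ht1 => /esym e.
by apply/eqP => tx0; move: e; rewrite tx0 mul0r; apply/eqP; rewrite eq_sym oner_eq0.
Qed.

Lemma coef_map_t D t (p : {poly L}) i : ph D t -> (map_poly t p)`_i = t p`_i.
Proof. by move=> Ht; case: (Ht) => HD _ _ _; rewrite coef_map_id0 // (t0 Ht). Qed.

Lemma map_t_nz D t (p : {poly L}) : ph D t -> pOver D p -> p != 0 -> map_poly t p != 0.
Proof.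
move=> Ht Hp nz; apply/eqP => e.
have := lead_coef_eq0 p; rewrite (negbTE nz) lead_coefE => /negbT ln.
have := ph_nz Ht (Hp _) ln; rewrite -(coef_map_t _ _ Ht) e coef0 eqxx //.
Qed.

Lemma alg_t_coef D D' t (p : {poly L}) i : ph D t -> J0 D t -> {subset D <= D'} ->
  pOver D p -> alg D' (map_poly t p)`_i.
Proof. by move=> Ht HJ sub Hp; rewrite (coef_map_t _ _ Ht); apply: alg_mono sub (HJ _ (Hp i)). Qed.

Section Zorn.
Variables (D0 : {pred L}) (t0 : L -> L) (Ht0 : ph D0 t0) (HJ0 : J0 D0 t0).

Definition okP (p : (L -> bool) * (L -> L)) :=
  [/\ {subset D0 <= p.1}, {in D0, p.2 =1 t0}, ph p.1 p.2 & J0 p.1 p.2].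

Definition TT := {p | okP p}.
Definition RR (u v : TT) : bool :=
  `[< {subset (sval u).1 <= (sval v).1} /\ {in (sval u).1, (sval u).2 =1 (sval v).2} >].

Lemma ok0 : okP (D0, t0).
Proof. by split. Qed.

Definition base : TT := @exist ((L -> bool) * (L -> L)) okP (D0 : L -> bool, t0) ok0.

Lemma RR_refl : forall u, RR u u.
Proof. by move=> u; rewrite /RR; apply/asboolP; split. Qed.

Lemma RR_trans : forall u v w, RR u v -> RR v w -> RR u w.
Proof.
rewrite /RR => u v w /asboolP [s1 e1] /asboolP [s2 e2]; apply/asboolP; split.
  by move=> y /s1 /s2.
by move=> y yu; rewrite (e1 y yu) (e2 y (s1 y yu)).
Qed.

Section Chain.
Variables (A : TT -> Prop) (tot : classical_sets.total_on A (fun u v => RR u v)).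
Variables (u0 : TT) (Au0 : A u0).

Definition Ex y := exists u, A u /\ y \in (sval u).1.
Definition DU : {pred L} := fun y => `[< Ex y >].
Definition tU y := match pselect (Ex y) with left H => (sval (sval (cid H))).2 y | right _ => t0 y end.

Lemma tU_eq u y : A u -> y \in (sval u).1 -> tU y = (sval u).2 y.
Proof.
move=> Au yu; rewrite /tU; case: pselect => [H|nH]; last by case: nH; exists u.
case: cid => v /= [Av yv].
by case: (tot Av Au) => /asboolP [s e]; [rewrite e | rewrite -e].
Qed.

Lemma DU_in u y : A u -> y \in (sval u).1 -> y \in DU.
Proof. by move=> Au yu; rewrite /DU unfold_in; apply/asboolP; exists u. Qed.

Lemma DU_P y : y \in DU -> exists u, A u /\ y \in (sval u).1.
Proof. by rewrite /DU unfold_in => /asboolP. Qed.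

Lemma common x y : x \in DU -> y \in DU ->
  exists u, [/\ A u, x \in (sval u).1 & y \in (sval u).1].
Proof.
move=> /DU_P [u [Au xu]] /DU_P [v [Av yv]].
case: (tot Au Av) => /asboolP [s _]; first by exists v; split => //; apply: s.
by exists u; split => //; apply: s.
Qed.

Lemma okU : okP (DU, tU).
Proof.
case: (svalP u0) => s0 e0 [[H1 _ _] _ _ Ht1] _.
split => /=.
- by move=> y /s0 yu; apply: DU_in Au0 yu.
- by move=> y yD; rewrite (tU_eq Au0 (s0 _ yD)) e0.
- split.
  + split; first by apply: DU_in Au0 H1.
    * move=> x y xD yD; have [u [Au xu yu]] := common xD yD.
      case: (svalP u) => _ _ [[_ Hs _] _ _ _] _; apply: DU_in Au _; exact: Hs.
    * move=> x y xD yD; have [u [Au xu yu]] := common xD yD.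
      case: (svalP u) => _ _ [[_ _ Hd] _ _ _] _; apply: DU_in Au _; exact: Hd.
  + move=> x y xD yD; have [u [Au xu yu]] := common xD yD.
    case: (svalP u) => _ _ [[_ Hs _] HB _ _] _.
    by rewrite !(tU_eq Au) // ?HB //; apply: Hs.
  + move=> x y xD yD; have [u [Au xu yu]] := common xD yD.
    case: (svalP u) => _ _ [[_ Hs Hd] _ HM _] _.
    have Hm : x * y \in (sval u).1.
      have yi : y^-1 \in (sval u).1 by rewrite -div1r; apply: Hd => //; case: (svalP u) => _ _ [[]].
      by rewrite -[y]invrK; apply: Hd.
    by rewrite !(tU_eq Au) // ?HM.
  + by rewrite (tU_eq Au0 H1).
- move=> y /DU_P [u [Au yu]]; rewrite (tU_eq Au yu).
  case: (svalP u) => _ _ _ HJ; apply: alg_mono (HJ _ yu).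
  by move=> z zu; apply: DU_in Au zu.
Qed.

End Chain.

Lemma chain_ub : forall A : classical_sets.set TT,
  classical_sets.total_on A (fun u v => RR u v) -> exists t, forall s, A s -> RR s t.
Proof.
move=> A tot.
have [[u0 Au0]|nA] := pselect (exists u, A u); last first.
  by exists base => s As; case: nA; exists s.
exists (@exist ((L -> bool) * (L -> L)) okP (DU A : L -> bool, tU A) (okU tot Au0)) => s As; apply/asboolP; split => /=.
  by move=> y ys; apply: DU_in As ys.
by move=> y ys; rewrite (tU_eq tot As ys).
Qed.

Lemma zorn_max : exists M : TT, forall s, RR M s -> RR s M.
Proof. by have [M HM] := classical_sets.ZL_preorder base RR_refl RR_trans chain_ub; exists M. Qed.

End Zorn.
End Gen.

Section Main.
Variable L : numClosedFieldType.

Lemma alg_frac (D D2 : {pred L}) t (p q : {poly L}) b : ph D t -> J0 D t -> {subset D <= D2} ->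
  GRing.divring_closed D2 -> alg D2 b -> pOver D p -> pOver D q ->
  alg D2 ((map_poly t p).[b] / (map_poly t q).[b]).
Proof.
move=> Ht HJ sub HD2 Hb Hp Hq.
apply: alg_div => //; apply: alg_horner => // i; exact: alg_t_coef Ht HJ sub _.
Qed.

Lemma grow (D : {pred L}) t a : ph D t -> J0 D t -> a \notin D ->
  exists D2 : {pred L}, exists t2, [/\ ph D2 t2, J0 D2 t2, {subset D <= D2},
     {in D, t2 =1 t} & a \in D2].
Proof.
move=> Ht HJ aD; have HD : GRing.divring_closed D by case: Ht.
have sub0 : {subset D <= D} by [].
case: (pselect (alg D a)) => [Ha|nHa].
  have [b [compat [m Hm [mnz mb]]]] := ALGC HD Ht Ha.
  have [D2 [t2 [[ph2 sub aD2 agree] [_ Hrep]]]] := EXT HD Ht compat.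
  have HD2 : GRing.divring_closed D2 by case: ph2.
  have Hb : alg D b.
    apply: (alg_root HD (map_t_nz Ht Hm mnz) mb) => i; exact: alg_t_coef Ht HJ sub0 Hm.
  exists D2, t2; split => // y /Hrep [p [q [Hp Hq ->]]].
  exact: alg_frac Ht HJ sub HD2 (alg_mono sub Hb) Hp Hq.
have compat : forall p, pOver D p -> (p.[a] == 0) = ((map_poly t p).[a] == 0).
  move=> p Hp; have [->|nz] := eqVneq p 0; first by rewrite map_poly0 horner0 eqxx.
  have -> : (p.[a] == 0) = false.
    by apply/negbTE/eqP => pa; apply: nHa; exists p.
  apply/esym/negbTE/eqP => pa; apply: nHa.
  apply: (alg_root HD (map_t_nz Ht Hp nz) pa) => i; exact: alg_t_coef Ht HJ sub0 Hp.
have [D2 [t2 [[ph2 sub aD2 agree] [_ Hrep]]]] := EXT HD Ht compat.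
have HD2 : GRing.divring_closed D2 by case: ph2.
exists D2, t2; split => // y /Hrep [p [q [Hp Hq ->]]].
exact: alg_frac Ht HJ sub HD2 (alg_in HD2 aD2) Hp Hq.
Qed.

Lemma extend_all (D0 : {pred L}) t0 : ph D0 t0 -> J0 D0 t0 ->
  exists s : L -> L, [/\ forall x y, s (x - y) = s x - s y,
     forall x y, s (x * y) = s x * s y, s 1 = 1 & {in D0, s =1 t0}].
Proof.
move=> Ht0 HJ0; have [M HM] := zorn_max Ht0 HJ0.
case: M HM => [[D t] Hok] HM; case: (Hok) => s0 e0 Ht HJ.
have allD : forall a, a \in (D : {pred L}).
  move=> a; apply/negPn/negP => aD.
  have [D2 [t2 [ph2 HJ2 sub agree aD2]]] := grow Ht HJ aD.
  have ok2 : okP D0 t0 ((D2 : L -> bool), t2).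
    split => //=; first by move=> y /s0 /sub.
    by move=> y yD; rewrite agree ?e0 //; apply: s0.
  have := HM (@exist ((L -> bool) * (L -> L)) (okP D0 t0) (D2 : L -> bool, t2) ok2).
  rewrite /RR /= => H; have /asboolP [sub2 _] := H (introT (asboolP _) (conj sub (fun y yD => esym (agree y yD)))).
  by move/negP: aD; apply; apply: sub2.
case: Ht => _ HB HMul H1; exists t; split => //.
- by move=> x y; apply: HB.
- by move=> x y; apply: HMul.
Qed.


Definition Qp : {pred L} := fun y => `[< exists q : rat, y = ratr q >].

Lemma QpP y : reflect (exists q : rat, y = ratr q) (y \in Qp).
Proof. by rewrite /Qp unfold_in; apply: asboolP. Qed.

Lemma Qp_closed : GRing.divring_closed Qp.
Proof.
split.
- by apply/QpP; exists 1; rewrite rmorph1.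
- by move=> x y /QpP [q ->] /QpP [q' ->]; apply/QpP; exists (q - q'); rewrite rmorphB.
- by move=> x y /QpP [q ->] /QpP [q' ->]; apply/QpP; exists (q / q'); rewrite fmorph_div.
Qed.

Lemma ph_id (D : {pred L}) : GRing.divring_closed D -> ph D id.
Proof. by move=> HD; split. Qed.

Lemma J0_id (D : {pred L}) : GRing.divring_closed D -> J0 D id.
Proof. by move=> HD y yD; apply: alg_in. Qed.

Lemma moving x : ~ (exists q : rat, x = ratr q) ->
  exists s : L -> L, [/\ forall x y, s (x - y) = s x - s y,
     forall x y, s (x * y) = s x * s y, s 1 = 1 & s x != x].
Proof.
move=> nQ; have xQ : x \notin Qp by apply/negP => /QpP.
have HQ := Qp_closed; have phQ := ph_id HQ; have JQ := J0_id HQ.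
have subQ : {subset Qp <= Qp} by [].
suff [D2 [t2 [ph2 J2 xD2 [y [t2x yx]]]]] : exists D2 : {pred L}, exists t2,
    [/\ ph D2 t2, J0 D2 t2, x \in D2 & exists y, t2 x = y /\ y != x].
  have [s [sB sM s1 sD]] := extend_all ph2 J2.
  by exists s; split => //; rewrite sD // t2x.
case: (pselect (alg Qp x)) => [Ha|nHa].
  have [m mm] := minpoly_ex HQ Ha.
  have [y yx my] := other_root mm xQ.
  have mb : (map_poly (tS id) m).[y] = 0 by rewrite -(map_t_val phQ) map_poly_id.
  have compat : forall p, pOver Qp p -> (p.[x] == 0) = ((map_poly id p).[y] == 0).
    move=> p /(polyOver_valP HQ) [q ->]; rewrite (map_t_val phQ).
    exact: (compat_min phQ mm mb q).
  have [D2 [t2 [[ph2 sub aD2 agree] [t2x Hrep]]]] := EXT HQ phQ compat.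
  have HD2 : GRing.divring_closed D2 by case: ph2.
  have Hy : alg Qp y.
    apply: (alg_root HQ _ my); first by rewrite map_poly_eq0; case: mm.
    by move=> i; apply: (alg_in HQ); apply: (polyOver_map m i).
  exists D2, t2; split => //; last by exists y.
  move=> z /Hrep [p [q [Hp Hq ->]]]; exact: alg_frac phQ JQ sub HD2 (alg_mono sub Hy) Hp Hq.
have Q1 : (1 : L) \in Qp by apply/QpP; exists 1; rewrite rmorph1.
have QN1 : (-1 : L) \in Qp by apply/QpP; exists (-1); rewrite rmorphN1.
have compat : forall p, pOver Qp p -> (p.[x] == 0) = ((map_poly id p).[x + 1] == 0).
  move=> p Hp; have -> : map_poly id p = p by apply: map_poly_id.
  have [->|nz] := eqVneq p 0; first by rewrite !horner0 eqxx.
  have -> : (p.[x] == 0) = false by apply/negbTE/eqP => px; apply: nHa; exists p.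
  apply/esym/negbTE/eqP => px1; apply: nHa.
  have h : alg Qp (x + 1) by exists p.
  by have := alg_add HQ h (alg_in HQ QN1); rewrite addrK.
have [D2 [t2 [[ph2 sub aD2 agree] [t2x Hrep]]]] := EXT HQ phQ compat.
have HD2 : GRing.divring_closed D2 by case: ph2.
have Hy : alg D2 (x + 1). have h1 := alg_in HD2 aD2. have h2 := alg_in HD2 (sub _ Q1). exact: (alg_add HD2 h1 h2).
exists D2, t2; split => //; last first.
  exists (x + 1); split => //; apply/eqP => e.
  have : (1 : L) = 0 by rewrite -(addKr x 1) e addNr.
  by move/eqP; rewrite oner_eq0.
move=> z /Hrep [p [q [Hp Hq ->]]]; exact: alg_frac phQ JQ sub HD2 Hy Hp Hq.
Qed.

End Main.

Section Adeq.
Variable K : numFieldType.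

Lemma adeq_frac (n d : nat) (b : bool) : (0 < d)%N ->
  Ktilde ((-1) ^+ b * (n%:R / d%:R) : K).
Proof.
move=> d0; set s : K := n%:R / d%:R; set r : K := (-1) ^+ b * s.
set N := maxn n d.
exists (0 :: r :: s :: [seq (k%:R : K) | k <- iota 1 N]); split.
  by rewrite !inE eqxx orbT.
move=> f H1 HA HM.
have inN k : (0 < k <= N)%N -> (k%:R : K) \in (0 :: r :: s :: [seq (k%:R : K) | k <- iota 1 N]).
  move=> hk; rewrite !inE; apply/orP; right; apply/orP; right; apply/orP; right.
  by apply: map_f; rewrite mem_iota; lia.
have in0 : (0 : K) \in (0 :: r :: s :: [seq (k%:R : K) | k <- iota 1 N]) by rewrite inE eqxx.
have ins : s \in (0 :: r :: s :: [seq (k%:R : K) | k <- iota 1 N]) by rewrite !inE eqxx !orbT.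
have inr : r \in (0 :: r :: s :: [seq (k%:R : K) | k <- iota 1 N]) by rewrite !inE eqxx !orbT.
have f0 : f 0 = 0.
  have := HA 0 0 in0 in0; rewrite addr0 in0 => /(_ isT) e.
  by apply/eqP; rewrite -(addrI (f 0) (etrans (addr0 (f 0)) e)).
have fn k : (0 < k <= N)%N -> f k%:R = k%:R.
  elim: k => [//|k IH] hk.
  have in1 : (1 : K) \in (0 :: r :: s :: [seq (k%:R : K) | k <- iota 1 N]).
    by rewrite -[1]/(1%:R); apply: inN; lia.
  have f1 : f 1 = 1 by apply: H1.
  case: k IH hk => [|k] IH hk; first by rewrite f1.
  have e : (k.+2%:R : K) = k.+1%:R + 1 by rewrite -addn1 natrD.
  rewrite e HA ?IH ?f1 //; try (apply: inN; lia); try (rewrite -e; apply: inN; lia).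
  lia.
have fs : f s = s.
  have [n0|npos] := posnP n; first by rewrite /s n0 mul0r f0.
  have dnz : (d%:R : K) != 0 by rewrite pnatr_eq0 -lt0n.
  have e : (d%:R : K) * s = n%:R by rewrite /s mulrC divfK.
  have hd : (0 < d <= N)%N by lia.
  have hn : (0 < n <= N)%N by lia.
  have := HM _ _ (inN d hd) ins; rewrite e (inN n hn) => /(_ isT).
  rewrite (fn _ hn) (fn _ hd) => /esym h.
  by apply: (mulIf dnz); rewrite mulrC h mulrC e.
case: b @r inr H1 HA HM inN in0 ins => r inr H1 HA HM inN in0 ins; last by rewrite /r expr0 mul1r fs.
have e : s + r = 0 by rewrite /r expr1 mulN1r subrr.
have := HA _ _ ins inr; rewrite e in0 f0 fs => /(_ isT) /esym/eqP.
move/eqP => h; have -> : f r = (s + f r) - s by ring.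
by rewrite h sub0r /r expr1 mulN1r.
Qed.

Lemma rat_Ktilde (q : rat) : Ktilde (ratr q : K).
Proof.
have <- : (numq q)%:~R / (denq q)%:~R = (ratr q : K).
  by rewrite -[in RHS](divq_num_den q) fmorph_div !rmorph_int.
have := denq_gt0 q; case: (denq q) => [d|d] // d0.
case: (numq q) => [n|n].
  by have := @adeq_frac n d false d0; rewrite expr0 mul1r.
by have := @adeq_frac n.+1 d true d0; rewrite expr1 mulN1r NegzE mulNr.
Qed.
End Adeq.

Section MkM.
Variables (F : fieldType) (s : F -> F).
Hypotheses (sB : forall x y, s (x - y) = s x - s y)
  (sM : forall x y, s (x * y) = s x * s y) (s1 : s 1 = 1).
Definition sfun := s.
HB.instance Definition _ := GRing.isZmodMorphism.Build F F sfun sB.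
HB.instance Definition _ := GRing.isMonoidMorphism.Build F F sfun (s1, sM).
Definition smorph : {rmorphism F -> F} := sfun.
End MkM.

Theorem corollary2 :
  (forall x : CC, Ktilde x <-> Khat x) /\ (forall x : CC, Khat x <-> is_rational x).
Proof.
have KtK : forall x : CC, Ktilde x -> Khat x.
  move=> x [A [xA HA]] sigma; apply: HA => [_|a b _ _ _|a b _ _ _].
  - exact: rmorph1.
  - exact: rmorphD.
  - exact: rmorphM.
have KQ : forall x : CC, Khat x -> is_rational x.
  move=> x Hx; case: (pselect (exists q : rat, x = ratr q)) => // nQ; exfalso.
  have [s [sB sM s1 sx]] := @moving (complex.complex Rdefinitions.R : numClosedFieldType) x nQ.
  have := Hx (smorph sB sM s1); rewrite /= /sfun => e.
  by move: sx; rewrite e eqxx.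
have QK : forall x : CC, is_rational x -> Khat x.
  by move=> x [q ->] sigma; exact: fmorph_rat.
split => x; split.
- exact: KtK.
- by move/KQ => [q ->]; exact: rat_Ktilde.
- exact: KQ.
- exact: QK.
Qed.
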